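(* Let $M\in\mathrm{M}_n(\mathbb{K})$ be a cyclic matrix with minimal polynomial $f=f_1^{m_1}\cdots f_s^{m_s}$, where $f_1,\dots,f_s\in\mathbb{K}[x]$ are pairwise distinct monic irreducible polynomials and $m_i\ge1$. Let $\mathcal{C}\subseteq\mathbb{L}^n$ be a nonzero $M$-cyclic code of dimension $k$ with generator polynomial $g$. Then $M_k(\mathcal{C})=n$ if and only if $f_i\nmid g$ for all $i\in\{1,\dots,s\}$.
   Context: Let $\mathbb{L}/\mathbb{K}$ be a field extension of finite degree $m\ge n$. Vectors are row vectors. For $c=(c_1,\dots,c_n)\in\mathbb{L}^n$, $\mathrm{Rsupp}(c)\subseteq\mathbb{K}^n$ is the $\mathbb{K}$-row space of the $m\times n$ matrix over $\mathbb{K}$ whose $j$-th column is the coordinate vector of $c_j$ in a fixed $\mathbb{K}$-basis of $\mathbb{L}$; for an $\mathbb{L}$-subspace $\mathcal{D}$, $\mathrm{wt}_R(\mathcal{D})$ is the $\mathbb{K}$-dimension of the span of all $\mathrm{Rsupp}(d)$, $d\in\mathcal{D}$. For a $k$-dimensional $\mathbb{L}$-subspace $\mathcal{C}$ and $1\le r\le k$, $M_r(\mathcal{C})=\min\{\mathrm{wt}_R(\mathcal{D}):\mathcal{D}\subseteq\mathcal{C},\dim_{\mathbb{L}}\mathcal{D}=r\}$. A matrix $M\in\mathrm{M}_n(\mathbb{K})$ is cyclic if there is $v\in\mathbb{K}^n$ (a cyclic vector) with $(v,vM^t,\dots,v(M^t)^{n-1})$ a basis; equivalently its minimal polynomial $f$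 has degree $n$. An $M$-cyclic code is an $\mathbb{L}$-subspace $\mathcal{C}\subseteq\mathbb{L}^n$ with $cM^t\in\mathcal{C}$ for all $c\in\mathcal{C}$; each equals $\mathcal{C}_g=\{v\,g(M)^tP(M)^t:P\in\mathbb{L}[x]\}$ for a unique monic divisor $g$ of $f$ in $\mathbb{L}[x]$ (its generator polynomial), and $\dim\mathcal{C}_g=n-\deg g$. *)

(* Defs.v *)
From HB Require Import structures.
From mathcomp Require Import all_boot all_order all_algebra all_field.
From Stdlib Require Import ClassicalEpsilon.
Set Implicit Arguments. Unset Strict Implicit. Unset Printing Implicit Defensive.
Import GRing.Theory.
Local Open Scope ring_scope.

Section RankMetric.
Variables (K : fieldType) (L : fieldExtType K) (n : nat).

(* Rsupp(c): the K-row space of the (dim L) x n matrix over K whose j-th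
   column is the coordinate vector of c_j in the fixed K-basis vbasis {:L}. *)
Definition Rsupp_mx (c : 'rV[L]_n) : 'M[K]_(\dim {:L}, n) :=
  \matrix_(i < \dim {:L}, j < n) coord (vbasis fullv) i (c 0 j).

Definition Rspan (p : nat) (D : 'M[L]_(p, n)) : 'M[K]_n :=
  epsilon (inhabits 0) (fun W : 'M[K]_n =>
    (forall d : 'rV[L]_n, (d <= D)%MS -> (Rsupp_mx d <= W)%MS) /\
    (forall W' : 'M[K]_n,
       (forall d : 'rV[L]_n, (d <= D)%MS -> (Rsupp_mx d <= W')%MS) ->
       (W <= W')%MS)).

Definition wtR (p : nat) (D : 'M[L]_(p, n)) : nat := \rank (Rspan D).

Definition Mr (p : nat) (C : 'M[L]_(p, n)) (r : nat) : nat :=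
  epsilon (inhabits 0%N) (fun w : nat =>
    (exists D : 'M[L]_n, (D <= C)%MS /\ \rank D = r /\ wtR D = w) /\
    (forall D : 'M[L]_n, (D <= C)%MS -> \rank D = r -> (w <= wtR D)%N)).

End RankMetric.

Definition cyclic_vector (K : fieldType) (n : nat) (M : 'M[K]_n) (v : 'rV[K]_n)
  : Prop := \rank (\matrix_(i < n) (v *m (M^T) ^+ i)) = n.

Definition cyclic_mx (K : fieldType) (n : nat) (M : 'M[K]_n) : Prop :=
  exists v, cyclic_vector M v.

Definition Mcyclic_code (K : fieldType) (L : fieldExtType K) (n p : nat)
  (M : 'M[K]_n) (C : 'M[L]_(p, n)) : Prop :=
  forall c : 'rV[L]_n, (c <= C)%MS -> (c *m (map_mx (in_alg L) M)^T <= C)%MS.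

Definition in_Cg (K : fieldType) (L : fieldExtType K) (n : nat)
  (M : 'M[K]_n.+1) (v : 'rV[K]_n.+1) (g : {poly L}) (c : 'rV[L]_n.+1) : Prop :=
  exists P : {poly L},
    c = map_mx (in_alg L) v *m (horner_mx (map_mx (in_alg L) M) g)^T
          *m (horner_mx (map_mx (in_alg L) M) P)^T.

Definition generator_poly (K : fieldType) (L : fieldExtType K) (n p : nat)
  (M : 'M[K]_n.+1) (v : 'rV[K]_n.+1) (C : 'M[L]_(p, n.+1)) (g : {poly L})
  : Prop :=
  [/\ g \is monic, g %| map_poly (in_alg L) (mxminpoly M) &
      forall c : 'rV[L]_n.+1, (c <= C)%MS <-> in_Cg M v g c].

(* Main.v *)
Require Import Defs.
From HB Require Import structures.
From mathcomp Require Import all_boot all_order all_algebra all_field.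
From Stdlib Require Import ClassicalEpsilon Classical.
From mathcomp Require Import zify.
Set Implicit Arguments. Unset Strict Implicit. Unset Printing Implicit Defensive.
Import GRing.Theory.
Local Open Scope ring_scope.

Section Basis.
Variables (K : fieldType) (L : fieldExtType K).
Local Notation B := (vbasis (fullv : {vspace L})).
Local Notation d := (\dim (fullv : {vspace L})).

Definition cmx (a b : nat) (i : 'I_d) (X : 'M[L]_(a, b)) : 'M[K]_(a, b) :=
  \matrix_(r, c) coord B i (X r c).

Lemma decomp a b (X : 'M[L]_(a, b)) :
  X = \sum_(i < d) B`_i *: map_mx (in_alg L) (cmx i X).
Proof.
apply/matrixP => r c; rewrite summxE.
rewrite {1}(coord_vbasis (memvf (X r c))).
apply: eq_bigr => i _; rewrite !mxE mulr_algr //.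
Qed.

Lemma indep a b (y : 'I_d -> 'M[K]_(a, b)) :
  \sum_(i < d) B`_i *: map_mx (in_alg L) (y i) = 0 -> forall i, y i = 0.
Proof.
move=> H i; apply/matrixP => r c.
have := congr1 (fun X : 'M[L]_(a,b) => coord B i (X r c)) H.
rewrite summxE mxE linear0 /=.
under eq_bigr => j _ do rewrite !mxE mulr_algr.
by rewrite coord_sum_free ?mxE //; apply: basis_free (vbasisP _).
Qed.

Lemma Rsupp_sub n m (dd : 'rV[L]_n) (W : 'M[K]_(m, n)) :
  (Rsupp_mx dd <= W)%MS = (dd <= map_mx (in_alg L) W)%MS.
Proof.
have rowE i : row i (Rsupp_mx dd) = cmx i dd.
  by apply/rowP => j; rewrite /Rsupp_mx /cmx !mxE.
apply/idP/idP.
  move=> H; rewrite [dd]decomp; apply: summx_sub => i _.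
  apply: scalemx_sub; rewrite map_submx -rowE.
  exact: submx_trans (row_sub _ _) H.
case/submxP => x Hx; apply/row_subP => i; rewrite rowE.
have := @indep _ _ (fun i => cmx i dd - cmx i x *m W).
move/(_ _)/(_ i)/eqP; rewrite subr_eq0 => /(_ _)/eqP ->; first exact: submxMl.
under eq_bigr => j _ do rewrite map_mxB map_mxM scalerBr scalemxAl.
by rewrite sumrB -mulmx_suml -!decomp Hx subrr.
Qed.

Section Span.
Variable n : nat.
Definition PP p (D : 'M[L]_(p, n)) (W : 'M[K]_n) :=
  forall dd : 'rV[L]_n, (dd <= D)%MS -> (Rsupp_mx dd <= W)%MS.

Lemma Rspan_ex p (D : 'M[L]_(p, n)) :
  exists W, PP D W /\ forall W', PP D W' -> (W <= W')%MS.
Proof.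
suff: forall m (W : 'M[K]_n), (\rank W <= m)%N -> PP D W ->
  exists W, PP D W /\ forall W', PP D W' -> (W <= W')%MS.
  move=> /(_ n 1%:M); apply; first exact: rank_leq_col.
  by move=> dd _; apply: submx1.
elim=> [|m IH] W hW PW.
  exists W; split => // W' _.
  by move: hW; rewrite leqn0 mxrank_eq0 => /eqP ->; apply: sub0mx.
case: (classic (forall W', PP D W' -> (W <= W')%MS)) => [H|]; first by exists W.
move=> /not_all_ex_not [W' H]; have [PW' nW] := imply_to_and _ _ H.
apply: (IH (W :&: W')%MS).
  have [le eq] := mxrank_leqif_sup (capmxSl W W').
  rewrite -ltnS; apply: leq_trans hW; rewrite ltn_neqAle le andbT eq.
  apply/negP => Hs; apply: nW; exact: submx_trans Hs (capmxSr _ _).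
move=> dd Hd; rewrite sub_capmx; apply/andP; split; [exact: PW | exact: PW'].
Qed.

Lemma Rspan_spec p (D : 'M[L]_(p, n)) :
  PP D (Rspan D) /\ forall W', PP D W' -> (Rspan D <= W')%MS.
Proof. exact: (epsilon_spec _ _ (Rspan_ex D)). Qed.

Lemma wtR_full p (D : 'M[L]_(p, n)) :
  wtR D = n <-> forall W : 'M[K]_n, PP D W -> \rank W = n.
Proof.
have [H1 H2] := Rspan_spec D; split.
  move=> hw W PW; apply/eqP; rewrite eqn_leq rank_leq_col /= -{1}hw.
  exact: mxrankS (H2 _ PW).
by move=> H; apply: H.
Qed.

Lemma wtR_eqmx p1 p2 (D1 : 'M[L]_(p1, n)) (D2 : 'M[L]_(p2, n)) :
  (D1 :=: D2)%MS -> wtR D1 = wtR D2.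
Proof.
move=> eqD; have [A1 A2] := Rspan_spec D1; have [B1 B2] := Rspan_spec D2.
have E W : PP D1 W <-> PP D2 W by split => H dd; [rewrite -eqD|rewrite eqD]; apply: H.
apply/eqP; rewrite /wtR eqn_leq; apply/andP; split; apply: mxrankS.
  by apply: A2 => dd Hd; apply: B1; rewrite -eqD.
by apply: B2 => dd Hd; apply: A1; rewrite eqD.
Qed.

Lemma Mr_eq p (C : 'M[L]_(p, n)) : Mr C (\rank C) = wtR <<C>>%MS.
Proof.
have ex : exists w, (exists D : 'M[L]_n, (D <= C)%MS /\ \rank D = \rank C /\ wtR D = w) /\
    (forall D : 'M[L]_n, (D <= C)%MS -> \rank D = \rank C -> (w <= wtR D)%N).
  exists (wtR <<C>>%MS); split.
    by exists <<C>>%MS; rewrite !genmxE; split.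
  move=> D sDC rD; rewrite (@wtR_eqmx _ _ D <<C>>%MS) //.
  apply/eqmxP; rewrite genmxE sDC /=.
  by have [_] := mxrank_leqif_sup sDC; rewrite rD eqxx genmxE => <-.
rewrite /Mr; have [[D [sDC [rD <-]]] _] := epsilon_spec (inhabits 0%N) _ ex.
apply: wtR_eqmx; apply/eqmxP; rewrite genmxE sDC /=.
by have [_] := mxrank_leqif_sup sDC; rewrite rD eqxx genmxE => <-.
Qed.
End Span.
End Basis.
Lemma trmxX (R : comNzRingType) m (A : 'M[R]_m.+1) i : (A ^+ i)^T = (A^T) ^+ i.
Proof.
elim: i => [|i IH]; first by rewrite !expr0 trmx1.
by rewrite exprS exprSr -!mulmxE trmx_mul IH.
Qed.

Lemma hcomm (R : comNzRingType) m (A : 'M[R]_m.+1) p q :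
  horner_mx A p *m horner_mx A q = horner_mx A q *m horner_mx A p.
Proof. by rewrite mulmxE -!rmorphM mulrC. Qed.

Section Peel.
Variables (K : fieldType) (n : nat) (M : 'M[K]_n.+1).

Lemma peel_pow (u : 'rV_n.+1) q m : u != 0 -> u *m horner_mx M (q ^+ m) = 0 ->
  exists R, u *m horner_mx M R != 0 /\ u *m horner_mx M R *m horner_mx M q = 0.
Proof.
elim: m => [|m IH] nz H.
  by move: H; rewrite expr0 rmorph1 mulmx1 => H; rewrite H eqxx in nz.
case: (eqVneq (u *m horner_mx M (q ^+ m)) 0) => [H0|Hn]; first exact: IH.
by exists (q ^+ m); split => //; rewrite -mulmxA mulmxE -rmorphM -exprSr.
Qed.

Lemma peel_seq (I : Type) (r : seq I) (F : I -> {poly K}) (u : 'rV_n.+1) :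
  u != 0 -> u *m horner_mx M (\prod_(j <- r) F j) = 0 ->
  exists j R, u *m horner_mx M R != 0 /\ u *m horner_mx M R *m horner_mx M (F j) = 0.
Proof.
elim: r u => [|j r IH] u nz H.
  by move: H; rewrite big_nil rmorph1 mulmx1 => H; rewrite H eqxx in nz.
move: H; rewrite big_cons rmorphM -mulmxE mulmxA => H.
case: (eqVneq (u *m horner_mx M (F j)) 0) => [H0|Hn].
  by exists j, 1; rewrite rmorph1 mulmx1.
have [j' [R [h1 h2]]] := IH _ Hn H.
exists j', (F j * R); rewrite rmorphM -mulmxE mulmxA; split => //.
Qed.
End Peel.

Section FinalDiv.
Variables (K : fieldType) (L : fieldExtType K) (n : nat) (M : 'M[K]_n.+1).
Local Notation B := (vbasis (fullv : {vspace L})).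
Local Notation d := (\dim (fullv : {vspace L})).

Lemma final_div (fi : {poly K}) (firr : irreducible_poly fi) (u : 'rV[K]_n.+1)
    (g : {poly L}) :
  u != 0 -> u *m horner_mx M fi = 0 ->
  map_mx (in_alg L) u *m horner_mx (map_mx (in_alg L) M) g = 0 ->
  map_poly (in_alg L) fi %| g.
Proof.
move=> nz hu hg.
set ML := map_mx (in_alg L) M; set uL := map_mx (in_alg L) u.
set fL := map_poly (in_alg L) fi.
have sfL : size fL = size fi by rewrite size_map_poly.
have fi0 : fi != 0 by rewrite -size_poly_gt0; apply: ltn_trans (firr.1).
have fL0 : fL != 0 by rewrite -size_poly_gt0 sfL size_poly_gt0.
set r := g %% fL.
have hr : uL *m horner_mx ML r = 0.
  have -> : r = g - g %/ fL * fL.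
    by apply/eqP; rewrite eq_sym subr_eq /r addrC -divp_eq.
  rewrite rmorphB mulmxBr hg sub0r; apply/eqP; rewrite oppr_eq0 rmorphM -mulmxE.
  rewrite hcomm mulmxA /fL -map_horner_mx /uL -map_mxM hu map_mx0 mul0mx //.
pose ri (i : 'I_d) := \poly_(j < size r) coord B i r`_j.
have hdec : r = \sum_i map_poly (in_alg L) (ri i) * (B`_i)%:P.
  apply/polyP => j; rewrite coef_sum; case: (ltnP j (size r)) => hj.
    under eq_bigr => i _ do rewrite coefMC coef_map coef_poly hj /=.
    rewrite {1}(coord_vbasis (memvf r`_j)); apply: eq_bigr => i _.
    by rewrite mulr_algl.
  under eq_bigr => i _ do rewrite coefMC coef_map coef_poly ltnNge hj /=.
  under eq_bigr => i _ do rewrite scale0r mul0r.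
  by rewrite big1 // nth_default.
have hmat : uL *m horner_mx ML r =
    \sum_(i < d) B`_i *: map_mx (in_alg L) (u *m horner_mx M (ri i)).
  rewrite {1}hdec rmorph_sum mulmx_sumr; apply: eq_bigr => i _.
  rewrite rmorphM /= horner_mx_C -mulmxE mulmxA mul_mx_scalar -map_horner_mx.
  by rewrite /uL -map_mxM.
have hri i : u *m horner_mx M (ri i) = 0.
  by apply: (@indep K L _ _ (fun i => u *m horner_mx M (ri i))); rewrite -hmat.
have ri0 i : ri i = 0.
  apply/eqP/negP => /negP nz'.
  have sri : (size (ri i) < size fi)%N.
    apply: leq_ltn_trans (size_poly _ _) _; rewrite -sfL ltn_modp //.
  have cop : coprimep fi (ri i).
    case: (eqVneq (size (gcdp fi (ri i))) 1%N) => [hs|hs]; first by rewrite /coprimep hs.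
    have H := firr.2 _ hs (dvdp_gcdl _ _).
    have : fi %| ri i by rewrite -(eqp_dvdl _ H) dvdp_gcdr.
    by move/(dvdp_leq nz'); rewrite leqNgt sri.
  have [[a b] /= hab] := Bezout_eq1_coprimepP _ _ cop.
  move: hab; rewrite (mulrC a) (mulrC b) => hab.
  have : u *m horner_mx M (fi * a + ri i * b) = 0.
    by rewrite rmorphD !rmorphM mulmxDr -!mulmxE !mulmxA hu hri !mul0mx addr0.
  by rewrite hab rmorph1 mulmx1 => h; rewrite h eqxx in nz.
apply/modp_eq0P; rewrite -/r hdec big1 // => i _.
by rewrite ri0 rmorph0 mul0r.
Qed.
End FinalDiv.

Theorem corollary4 (K : fieldType) (L : fieldExtType K) (n : nat)
  (hLn : (n.+1 <= \dim {:L})%N)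
  (M : 'M[K]_n.+1) (v : 'rV[K]_n.+1) (hv : cyclic_vector M v)
  (s : nat) (fs : 'I_s -> {poly K}) (ms : 'I_s -> nat)
  (hfs_monic : forall i, fs i \is monic)
  (hfs_irr : forall i, irreducible_poly (fs i))
  (hfs_inj : injective fs)
  (hms : forall i, (1 <= ms i)%N)
  (hf : mxminpoly M = \prod_(i < s) fs i ^+ ms i)
  (p : nat) (C : 'M[L]_(p, n.+1)) (k : nat) (g : {poly L})
  (hC0 : C != 0) (hCcyc : Mcyclic_code M C) (hk : \rank C = k)
  (hg : generator_poly M v C g) :
  Mr C k = n.+1 <-> (forall i, ~~ (map_poly (in_alg L) (fs i) %| g)).
Proof.
have [gmon gdiv hCg] := hg.
set ML := map_mx (in_alg L) M; set vL := map_mx (in_alg L) v.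
set V0 := \matrix_(i < n.+1) (v *m (M^T) ^+ i).
have V0u : V0 \in unitmx by rewrite -row_free_unit /row_free hv.
have V0Lu : map_mx (in_alg L) V0 \in unitmx by rewrite map_unitmx.
have PPE (W : 'M[K]_n.+1) : PP <<C>>%MS W <->
    forall dd : 'rV[L]_n.+1, (dd <= C)%MS -> (dd <= map_mx (in_alg L) W)%MS.
  split => H dd hd.
    by rewrite -Rsupp_sub; apply: H; rewrite genmxE.
  by rewrite Rsupp_sub; apply: H; move: hd; rewrite genmxE.
rewrite -hk Mr_eq wtR_full; split.
  move=> H i; apply/negP => dvd.
  set A := horner_mx M (fs i).
  have fidvd : fs i %| mxminpoly M.
    rewrite hf (bigD1 i) //=; apply: dvdp_mulr.
    by rewrite -(prednK (hms i)) exprSr dvdp_mull.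
  have hA : A \notin unitmx.
    apply/negP => hu.
    set h := mxminpoly M %/ fs i.
    have hfe : h * fs i = mxminpoly M by rewrite divpK.
    have h0 : horner_mx M h = 0.
      rewrite -(mulmxK hu (horner_mx M h)) mulmxE -rmorphM /= hfe.
      by rewrite mx_root_minpoly -mulmxE mul0mx.
    have fne0 : mxminpoly M != 0 by rewrite monic_neq0 // mxminpoly_monic.
    have hne0 : h != 0 by apply: contraNneq fne0 => h0'; rewrite -hfe h0' mul0r.
    have := dvdp_leq hne0 (mxminpoly_min h0).
    rewrite -hfe size_mul // ?monic_neq0 //.
    have := (hfs_irr i).1; case: (size (fs i)) => // m hm.
    by rewrite addnS /=; lia.
  have rA : (\rank A < n.+1)%N.
    rewrite ltn_neqAle rank_leq_row andbT; apply: contra hA => /eqP rA.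
    by rewrite -row_free_unit /row_free rA.
  suff PW : PP <<C>>%MS (V0 *m A^T).
    have rW := H _ PW.
    have : (\rank (V0 *m A^T) < n.+1)%N.
      by apply: leq_ltn_trans (mxrankM_maxr _ _) _; rewrite mxrank_tr.
    by rewrite rW ltnn.
  apply/PPE => dd /hCg [P ->].
  set fL := map_poly (in_alg L) (fs i).
  have -> : vL *m (horner_mx ML g)^T *m (horner_mx ML P)^T =
      vL *m (horner_mx ML (P * (g %/ fL)))^T *m (horner_mx ML fL)^T.
    rewrite -!mulmxA -!trmx_mul; congr (_ *m _^T).
    rewrite !mulmxE -!rmorphM; congr (horner_mx _ _).
    by rewrite -{1}(divpK dvd) mulrA mulrC.
  rewrite /fL -map_horner_mx map_trmx -/A map_mxM.
  apply/submxP; exists (vL *m (horner_mx ML (P * (g %/ fL)))^T *m invmx (map_mx (in_alg L) V0)).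
  by rewrite mulmxA mulmxKV.
move=> H W /PPE PW; apply/eqP; apply/negPn/negP => hne.
have rW : (\rank W < n.+1)%N by rewrite ltn_neqAle hne rank_leq_row.
have : kermx W^T != 0.
  by rewrite -mxrank_eq0 mxrank_ker mxrank_tr -lt0n subn_gt0.
case/rowV0Pn => u /sub_kermxP huW nzu.
set uL := map_mx (in_alg L) u.
have hP0 P : vL *m (horner_mx ML g)^T *m (horner_mx ML P)^T *m uL^T = 0.
  have /PW /submxP [x ->] : (vL *m (horner_mx ML g)^T *m (horner_mx ML P)^T <= C)%MS.
    by apply/hCg; exists P.
  by rewrite -mulmxA map_trmx -map_mxM -(trmxK W) -trmx_mul huW trmx0 map_mx0 mulmx0.
set y := uL *m horner_mx ML g.
have hy : map_mx (in_alg L) V0 *m y^T = 0.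
  apply/row_matrixP => i; rewrite row_mul row0 -map_row rowK map_mxM.
  rewrite rmorphXn /= -map_trmx -trmxX -/ML -(horner_mx_X ML) -rmorphXn.
  rewrite /y trmx_mul mulmxA -(mulmxA vL) -trmx_mul hcomm trmx_mul mulmxA.
  exact: hP0.
have y0 : y = 0.
  by apply: trmx_inj; rewrite trmx0 -(mulKmx V0Lu y^T) hy mulmx0.
have hu0 : u *m horner_mx M (\prod_(i < s) fs i ^+ ms i) = 0.
  by rewrite -hf mx_root_minpoly mulmx0.
have [j [R [hR1 hR2]]] := peel_seq (F := fun i => fs i ^+ ms i) nzu hu0.
have [R2 [h1 h2]] := peel_pow hR1 hR2.
apply: (negP (H j)); apply: (final_div (hfs_irr j) h1 h2).
rewrite !map_mxM !map_horner_mx -/ML -/uL.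
rewrite -mulmxA hcomm mulmxA -(mulmxA uL) (hcomm _ _ g) mulmxA -/y y0 !mul0mx //.
Qed.
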